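(* Let $L\subseteq\Sigma^\omega$ be an $\omega$-language accepted by a Büchi $k$-counter automaton $\mathcal{A}$ such that $L$ is analytic but not Borel. Then the set of $\omega$-words which have $2^{\aleph_0}$ accepting runs of $\mathcal{A}$ has cardinality $2^{\aleph_0}$.
   Context: A (real-time) Büchi $k$-counter automaton is $(K,\Sigma,\Delta,q_0,F)$ with finite states $K$, initial state $q_0$, accepting states $F$, $\Delta\subseteq K\times\Sigma\times\{0,1\}^k\times K\times\{-1,0,1\}^k$ (no transition with $i_m=0$ and $j_m=-1$). From configuration $(q,c)\in K\times\mathbb{N}^k$, reading $a$, it may go to $(q',c+j)$ if $(q,a,i,q',j)\in\Delta$ with $i_m=0$ iff $c_m=0$. A run on an $\omega$-word is an infinite sequence of configurations from $(q_0,0,\dots,0)$ following the letters; it is accepting if a state of $F$ occurs infinitely often. Two runs are distinct if their sequences of configurations (including counter values) differ. Topology is the Cantor topology on $\Sigma^\omega$. *)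

(* Defs.v *)
From mathcomp Require Import all_boot all_order all_algebra.
Set Implicit Arguments.
Unset Strict Implicit.
Unset Printing Implicit Defensive.
Import GRing.Theory Num.Theory.

Definition oword (Sigma : Type) := nat -> Sigma.

Definition agree (A : Type) (n : nat) (x y : nat -> A) : Prop :=
  forall i, (i < n)%N -> x i = y i.

Definition cantor_open (Sigma : Type) (U : oword Sigma -> Prop) : Prop :=
  forall x, U x -> exists n, forall y, agree n x y -> U y.

Inductive borel (Sigma : Type) : (oword Sigma -> Prop) -> Prop :=
| borel_open U : cantor_open U -> borel U
| borel_compl U : borel U -> borel (fun x => ~ U x)
| borel_cunion (U : nat -> oword Sigma -> Prop) :
    (forall n, borel (U n)) -> borel (fun x => exists n, U n x).

Definition baire_continuous (Sigma : Type) (f : (nat -> nat) -> oword Sigma) :=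
  forall (y : nat -> nat) (n : nat), exists m,
    forall y', agree m y y' -> agree n (f y) (f y').

Definition analytic (Sigma : Type) (L : oword Sigma -> Prop) : Prop :=
  (forall x, ~ L x) \/
  exists f : (nat -> nat) -> oword Sigma,
    baire_continuous f /\ forall x, L x <-> exists y, f y = x.

Definition card_continuum (T : Type) (P : T -> Prop) : Prop :=
  exists f : (nat -> bool) -> {x : T | P x}, bijective f.

(* Delta q a i q' j : transition (q,a,i,q',j); i m = true means "counter m
   is nonzero" (i_m = 1), j m in {-1,0,1} is the counter increment. *)
Record counter_automaton (Sigma K : finType) (k : nat) := CounterAutomaton {
  q0 : K;
  final : {set K};
  Delta : K -> Sigma -> {ffun 'I_k -> bool} -> K -> {ffun 'I_k -> int} -> bool;
  Delta_incr : forall q a i q' j, Delta q a i q' j ->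
    forall m, j m \in [:: (-1)%R; 0%R; 1%R];
  Delta_nodec0 : forall q a i q' j, Delta q a i q' j ->
    forall m, i m = false -> j m != (-1)%R
}.

Definition config (K : Type) (k : nat) := (K * {ffun 'I_k -> nat})%type.

Definition step (Sigma K : finType) (k : nat) (A : counter_automaton Sigma K k)
  (c : config K k) (a : Sigma) (c' : config K k) : Prop :=
  exists (i : {ffun 'I_k -> bool}) (j : {ffun 'I_k -> int}),
    Delta A c.1 a i c'.1 j /\
    (forall m, i m = (c.2 m != 0%N)) /\
    (forall m, ((c'.2 m)%:Z = (c.2 m)%:Z + j m)%R).

Definition run (Sigma K : finType) (k : nat) (A : counter_automaton Sigma K k)
  (x : oword Sigma) (r : nat -> config K k) : Prop :=
  r 0%N = (q0 A, [ffun _ => 0%N]) /\ forall n, step A (r n) (x n) (r n.+1).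

Definition accepting_run (Sigma K : finType) (k : nat)
  (A : counter_automaton Sigma K k) (x : oword Sigma) (r : nat -> config K k) :=
  run A x r /\ forall N, exists n, (N <= n)%N /\ (r n).1 \in final A.

Definition lang (Sigma K : finType) (k : nat) (A : counter_automaton Sigma K k)
  : oword Sigma -> Prop :=
  fun x => exists r, accepting_run A x r.

(* Submission.v *)
Require Import Defs.
From mathcomp Require Import all_boot all_order all_algebra.
From mathcomp Require Import zify.
From Stdlib Require Import Classical ClassicalEpsilon FunctionalExtensionality PropExtensionality ProofIrrelevance.
Set Implicit Arguments.
Unset Strict Implicit.
Unset Printing Implicit Defensive.

Lemma fchoice (A B : Type) (R : A -> B -> Prop) :
  (forall a, exists b, R a b) -> exists f : A -> B, forall a, R a (f a).
Proof.
move=> H; exists (fun a => proj1_sig (constructive_indefinite_description _ (H a))).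
by move=> a; case: (constructive_indefinite_description _ (H a)).
Qed.

Lemma pred_ext (T : Type) (P Q : T -> Prop) : (forall x, P x <-> Q x) -> P = Q.
Proof.
move=> H; apply: functional_extensionality => x; exact: propositional_extensionality.
Qed.

Lemma agree_refl (A : Type) n (x : nat -> A) : agree n x x.
Proof. by []. Qed.
Lemma agree_sym (A : Type) n (x y : nat -> A) : agree n x y -> agree n y x.
Proof. by move=> H i Hi; rewrite H. Qed.
Lemma agree_trans (A : Type) n (x y z : nat -> A) : agree n x y -> agree n y z -> agree n x z.
Proof. by move=> H1 H2 i Hi; rewrite H1 // H2. Qed.
Lemma agree_le (A : Type) m n (x y : nat -> A) : (m <= n)%N -> agree n x y -> agree m x y.
Proof. by move=> Hmn H i Hi; apply: H; apply: leq_trans Hmn. Qed.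

Section Analytic.
Variable S : Type.

Definition closedP (F : (nat -> S) -> (nat -> nat) -> Prop) :=
  forall x y, (forall n, exists x' y', agree n x x' /\ agree n y y' /\ F x' y') -> F x y.

Definition an (A : (nat -> S) -> Prop) :=
  exists F, closedP F /\ forall x, A x <-> exists y, F x y.

Lemma an_ext (A B : (nat -> S) -> Prop) : (forall x, A x <-> B x) -> an A -> an B.
Proof.
move=> H [F [cF HF]]; exists F; split => // x; rewrite -H; exact: HF.
Qed.

Lemma an_closed (C : (nat -> S) -> Prop) :
  (forall x, (forall n, exists x', agree n x x' /\ C x') -> C x) -> an C.
Proof.
move=> HC; exists (fun x (_ : nat -> nat) => C x); split.
  move=> x y H; apply: HC => n; have [x' [y' [h1 [_ h3]]]] := H n; by exists x'.
by move=> x; split => [Cx|[]//]; exists (fun _ => 0%N).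
Qed.

Lemma an_empty : an (fun _ => False).
Proof. by apply: an_closed => x /(_ 0%N) [x' []]. Qed.

Lemma an_cunion (A : nat -> (nat -> S) -> Prop) :
  (forall k, an (A k)) -> an (fun x => exists k, A k x).
Proof.
move=> H; have [Fk HF] := fchoice H.
exists (fun x y => Fk (y 0%N) x (fun i => y i.+1)); split.
  move=> x y Happ.
  have [x0 [y0 [_ [h0 _]]]] := Happ 1%N.
  have Hy0 : y0 0%N = y 0%N by rewrite h0.
  have [cF _] := HF (y 0%N); apply: cF => n.
  have [x' [y' [h1 [h2 h3]]]] := Happ n.+1.
  exists x', (fun i => y' i.+1); split; first exact: agree_le h1.
  split; first by move=> i Hi; apply: h2.
  by have -> : y 0%N = y' 0%N by apply: h2.
move=> x; split.
  move=> [k Hk]; have [_ Hk'] := HF k; have [y Hy] := (proj1 (Hk' x)) Hk.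
  by exists (fun i => if i is i'.+1 then y i' else k).
move=> [y Hy]; exists (y 0%N); have [_ Hk'] := HF (y 0%N); apply/Hk'; by exists (fun i => y i.+1).
Qed.

Lemma pickle_bound (k n : nat) : exists m, (n <= m)%N /\ forall i, (i < n)%N -> (pickle (k, i) < m)%N.
Proof.
elim: n => [|n [m [Hm H]]]; first by exists 0%N.
exists (maxn m.+1 (pickle (k, n)).+1); split.
  by rewrite leq_max ltnS Hm.
move=> i; rewrite ltnS leq_eqVlt => /orP [/eqP ->|Hi].
  by rewrite leq_max leqnn orbT.
by rewrite leq_max; apply/orP; left; apply: ltnW; rewrite ltnS; apply: H.
Qed.

Lemma an_cinter (A : nat -> (nat -> S) -> Prop) :
  (forall k, an (A k)) -> an (fun x => forall k, A k x).
Proof.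
move=> H; have [Fk HF] := fchoice H.
exists (fun x y => forall k, Fk k x (fun i => y (pickle (k, i)))); split.
  move=> x y Happ k; have [cF _] := HF k; apply: cF => n.
  have [m [Hm Hb]] := pickle_bound k n.
  have [x' [y' [h1 [h2 h3]]]] := Happ m.
  exists x', (fun i => y' (pickle (k, i))); split; first exact: agree_le h1.
  split; last exact: h3.
  by move=> i Hi; apply: h2; apply: Hb.
move=> x; split.
  move=> Hx.
  have Hy : forall k, exists y, Fk k x y by move=> k; have [_ Hk] := HF k; apply/Hk.
  have [yk Hyk] := fchoice Hy.
  exists (fun n => if @unpickle (nat * nat)%type n is Some p then yk p.1 p.2 else 0%N).
  move=> k.
  have -> : (fun i => if @unpickle (nat * nat)%type (pickle (k, i)) is Some p then yk p.1 p.2 else 0%N) = yk k.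
    by apply: functional_extensionality => i; rewrite pickleK.
  exact: Hyk.
move=> [y Hy] k; have [_ Hk] := HF k; apply/Hk; by exists (fun i => y (pickle (k, i))).
Qed.

Lemma an_inter2 (A B : (nat -> S) -> Prop) : an A -> an B -> an (fun x => A x /\ B x).
Proof.
move=> HA HB.
apply: (@an_ext (fun x => forall k : nat, (if k is 0 then A else B) x)).
  move=> x; split; first by move=> H; split; [exact: (H 0%N)|exact: (H 1%N)].
  by move=> [h1 h2] [|k].
apply: an_cinter => -[|k] //.
Qed.

Lemma an_const_and (P : Prop) (A : (nat -> S) -> Prop) : an A -> an (fun x => P /\ A x).
Proof.
move=> HA; case: (classic P) => HP.
  by apply: an_ext HA => x; split => [h|[]//].
by apply: an_ext an_empty => x; split => [[]|[]].
Qed.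

Lemma an_open (U : (nat -> S) -> Prop) : cantor_open U -> an U.
Proof.
move=> HU; exists (fun x y => forall z, agree (y 0%N) x z -> U z); split.
  move=> x y Happ z Hz.
  have [x' [y' [h1 [h2 h3]]]] := Happ (y 0%N).+1.
  have e : y' 0%N = y 0%N by rewrite h2.
  apply: h3; rewrite e; apply: agree_trans Hz.
  exact: agree_sym (agree_le (leqnSn _) h1).
move=> x; split.
  by move=> /HU [n Hn]; exists (fun _ => n).
by move=> [y Hy]; apply: Hy.
Qed.

Lemma an_nopen (U : (nat -> S) -> Prop) : cantor_open U -> an (fun x => ~ U x).
Proof.
move=> HU; apply: an_closed => x H Ux.
have [n Hn] := HU x Ux; have [x' [h1 h2]] := H n; exact: h2 (Hn _ h1).
Qed.

Lemma borel_an (B : (nat -> S) -> Prop) : borel B -> an B /\ an (fun x => ~ B x).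
Proof.
elim => {B}.
- by move=> U HU; split; [exact: an_open|exact: an_nopen].
- move=> U _ [h1 h2]; split => //.
  by apply: an_ext h1 => x; split => [h|/NNPP//]; apply.
- move=> U _ IH; split; first by apply: an_cunion => n; case: (IH n).
  apply: (@an_ext (fun x => forall n, ~ U n x)).
    by move=> x; split => [h [n hn]|h n hn]; [exact: h hn| apply: h; exists n].
  by apply: an_cinter => n; case: (IH n).
Qed.

End Analytic.

Section BorelFacts.
Variable S : Type.
Implicit Types B C : (nat -> S) -> Prop.

Lemma borel_ext B C : borel B -> (forall x, B x <-> C x) -> borel C.
Proof. by move=> HB H; rewrite -(pred_ext H). Qed.

Lemma borel_clopen B : (exists n, forall x y, agree n x y -> B x -> B y) -> borel B.
Proof.
move=> [n Hn]; apply: borel_open => x Bx; exists n => y Hy; exact: Hn Hy Bx.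
Qed.

Lemma borel_T : borel (fun _ : nat -> S => True).
Proof. by apply: borel_clopen; exists 0%N. Qed.

Lemma borel_F : borel (fun _ : nat -> S => False).
Proof. by apply: borel_clopen; exists 0%N. Qed.

Lemma borel_not B : borel B -> borel (fun x => ~ B x).
Proof. exact: borel_compl. Qed.

Lemma borel_cinter (B : nat -> (nat -> S) -> Prop) :
  (forall n, borel (B n)) -> borel (fun x => forall n, B n x).
Proof.
move=> H; apply: (@borel_ext (fun x => ~ exists n, ~ B n x)).
  by apply: borel_compl; apply: borel_cunion => n; apply: borel_compl.
move=> x; split => [h n|h [n hn]//]; first by apply: NNPP => hn; apply: h; exists n.
Qed.

Lemma borel_count_union (I : countType) (B : I -> (nat -> S) -> Prop) :
  (forall i, borel (B i)) -> borel (fun x => exists i, B i x).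
Proof.
move=> H.
apply: (@borel_ext (fun x => exists n, if @unpickle I n is Some i then B i x else False)).
  apply: borel_cunion => n; case: (unpickle n) => [i|]; [exact: H|exact: borel_F].
move=> x; split => [[n]|[i hi]]; first by case: (unpickle n) => // i hi; exists i.
by exists (pickle i); rewrite pickleK.
Qed.

Lemma borel_count_inter (I : countType) (B : I -> (nat -> S) -> Prop) :
  (forall i, borel (B i)) -> borel (fun x => forall i, B i x).
Proof.
move=> H.
apply: (@borel_ext (fun x => ~ exists i, ~ B i x)).
  by apply: borel_compl; apply: borel_count_union => i; apply: borel_compl.
move=> x; split => [h n|h [n hn]//]; first by apply: NNPP => hn; apply: h; exists n.
Qed.

Lemma borel_or B C : borel B -> borel C -> borel (fun x => B x \/ C x).
Proof.
move=> HB HC; apply: (@borel_ext (fun x => exists n : nat, if n is 0 then B x else C x)).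
  by apply: borel_cunion => -[|n].
move=> x; split => [[[|n] h]|[h|h]]; [by left|by right|by exists 0%N|by exists 1%N].
Qed.

Lemma borel_and B C : borel B -> borel C -> borel (fun x => B x /\ C x).
Proof.
move=> HB HC; apply: (@borel_ext (fun x => ~ (~ B x \/ ~ C x))).
  by apply: borel_compl; apply: borel_or; apply: borel_compl.
move=> x; split => [h|[h1 h2] [//|//]]; split; apply: NNPP => hh; apply: h; by [left|right].
Qed.

Lemma borel_const_impl (P : Prop) B : borel B -> borel (fun x => P -> B x).
Proof.
move=> HB; case: (classic P) => HP.
  apply: (borel_ext HB) => x; split => [h _|h] //; exact: h.
apply: (borel_ext borel_T) => x; split => // _ h; exact: (HP h).
Qed.

Lemma borel_const_and (P : Prop) B : borel B -> borel (fun x => P /\ B x).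
Proof.
move=> HB; case: (classic P) => HP.
  apply: (borel_ext HB) => x; split => [h|[]] //.
apply: (borel_ext borel_F) => x; split => [|[]] //.
Qed.

End BorelFacts.

Section Separation.
Variable S : countType.
Implicit Types A B C : (nat -> S) -> Prop.

Definition Sep A B := exists C, borel C /\ (forall x, A x -> C x) /\ (forall x, B x -> ~ C x).

Lemma Sep_unionL (I : countType) (A : I -> (nat -> S) -> Prop) B :
  (forall i, Sep (A i) B) -> Sep (fun x => exists i, A i x) B.
Proof.
move=> H; have [C HC] := fchoice H.
exists (fun x => exists i, C i x); split; first by apply: borel_count_union => i; case: (HC i).
split; first by move=> x [i hi]; exists i; have [_ [h _]] := HC i; apply: h.
by move=> x Bx [i hi]; have [_ [_ h]] := HC i; exact: h Bx hi.
Qed.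

Lemma Sep_unionR (I : countType) A (B : I -> (nat -> S) -> Prop) :
  (forall i, Sep A (B i)) -> Sep A (fun x => exists i, B i x).
Proof.
move=> H; have [C HC] := fchoice H.
exists (fun x => forall i, C i x); split; first by apply: borel_count_inter => i; case: (HC i).
split; first by move=> x Ax i; have [_ [h _]] := HC i; apply: h.
by move=> x [i Bi] hx; have [_ [_ h]] := HC i; exact: h Bi (hx i).
Qed.

Lemma Sep_ext A B A' B' : (forall x, A x <-> A' x) -> (forall x, B x <-> B' x) -> Sep A B -> Sep A' B'.
Proof. by move=> h1 h2; rewrite (pred_ext h1) (pred_ext h2). Qed.

Definition upd (T : Type) (f : nat -> T) n a := fun i => if i == n then a else f i.

Definition piece (F : (nat -> S) -> (nat -> nat) -> Prop) n x0 y0 :=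
  fun x => exists y, agree n x x0 /\ agree n y y0 /\ F x y.

Lemma agree_upd (T : Type) n (x x0 : nat -> T) a :
  agree n x x0 -> x n = a -> agree n.+1 x (upd x0 n a).
Proof.
move=> h e i; rewrite ltnS leq_eqVlt /upd => /orP [/eqP ->|hi]; first by rewrite eqxx.
by rewrite (ltn_eqF hi); apply: h.
Qed.

Lemma agree_upd' (T : Type) n (x x0 : nat -> T) a :
  agree n.+1 x (upd x0 n a) -> agree n x x0.
Proof.
move=> h i hi; rewrite h; last exact: ltnW.
by rewrite /upd (ltn_eqF hi).
Qed.

Lemma piece_split F n x0 y0 x :
  piece F n x0 y0 x <-> exists p : S * nat, piece F n.+1 (upd x0 n p.1) (upd y0 n p.2) x.
Proof.
split.
  move=> [y [h1 [h2 h3]]]; exists (x n, y n); exists y; split; first exact: agree_upd.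
  by split => //; apply: agree_upd.
move=> [p [y [h1 [h2 h3]]]]; exists y; split; first exact: agree_upd' h1.
by split => //; apply: agree_upd' h2.
Qed.

Lemma piece0 F x0 y0 x : piece F 0 x0 y0 x <-> exists y, F x y.
Proof. by split => [[y [_ [_ h]]]|[y h]]; exists y. Qed.

Record st := St { lv : nat; xa : nat -> S; ya : nat -> nat; xb : nat -> S; yb : nat -> nat }.

Theorem separation A B : an A -> an B -> (forall x, A x -> B x -> False) -> Sep A B.
Proof.
move=> [FA [cFA HA]] [FB [cFB HB]] disj.
case: (classic (exists x, A x)) => [[x0 Ax0]|nA]; last first.
  exists (fun _ => False); split; first exact: borel_F.
  split; first by move=> x Ax; apply: nA; exists x.
  by move=> x _ [].
apply: NNPP => nsep.
pose NS s := ~ Sep (piece FA (lv s) (xa s) (ya s)) (piece FB (lv s) (xb s) (yb s)).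
pose child s s' := lv s' = (lv s).+1 /\ exists (a b : S) (k l : nat),
   xa s' = upd (xa s) (lv s) a /\ ya s' = upd (ya s) (lv s) k /\
   xb s' = upd (xb s) (lv s) b /\ yb s' = upd (yb s) (lv s) l.
have desc : forall s, NS s -> exists s', child s s' /\ NS s'.
  move=> [n xa0 ya0 xb0 yb0] hs; apply: NNPP => hn; apply: hs => /=.
  apply: (@Sep_ext (fun x => exists p : S * nat, piece FA n.+1 (upd xa0 n p.1) (upd ya0 n p.2) x)
                  (fun x => exists p : S * nat, piece FB n.+1 (upd xb0 n p.1) (upd yb0 n p.2) x)).
    by move=> x; rewrite piece_split.
    by move=> x; rewrite piece_split.
  apply: Sep_unionL => -[a k]; apply: Sep_unionR => -[b l].
  apply: NNPP => hn2; apply: hn.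
  exists (St n.+1 (upd xa0 n a) (upd ya0 n k) (upd xb0 n b) (upd yb0 n l)); split => //.
  by split => //; exists a, b, k, l.
have hx : forall s, exists s', NS s -> child s s' /\ NS s'.
  move=> s; case: (classic (NS s)) => h; first by have [s' hs'] := desc s h; exists s'.
  by exists s.
have [nxt Hnxt] := fchoice hx.
pose s0 := St 0 x0 (fun _ => 0%N) x0 (fun _ => 0%N).
pose sq m := iter m nxt s0.
have Hsq : forall m, lv (sq m) = m /\ NS (sq m).
  elim => [|m [hl hn]].
    split => //; rewrite /NS /=; apply: contra_not nsep; apply: Sep_ext => x.
      by rewrite piece0; split => h; [apply/HA|apply/HA].
    by rewrite piece0; split => h; [apply/HB|apply/HB].
  have [hc hn'] := Hnxt _ hn; split => //.
  by rewrite /sq /= -/(sq m); case: hc => ->; rewrite hl.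
have Hch : forall m, child (sq m) (sq m.+1).
  by move=> m; have [_ hn] := Hsq m; have [hc _] := Hnxt _ hn.
have stab : forall (T : Type) (f : nat -> nat -> T), (forall m i, (i < m)%N -> f m.+1 i = f m i) ->
    forall m i, (i < m)%N -> f m i = f i.+1 i.
  move=> T f hf; elim => [//|m IH] i; rewrite ltnS leq_eqVlt => /orP [/eqP ->//|hi].
  by rewrite hf // IH.
have upd_lt : forall (T : Type) (g : nat -> T) m a i, (i < m)%N -> upd g m a i = g i.
  by move=> T g m a i hi; rewrite /upd (ltn_eqF hi).
have sA : forall m i, (i < m)%N -> xa (sq m) i = xa (sq i.+1) i.
  apply: (stab _ (fun m => xa (sq m))) => m i hi.
  have [hl [a [b [k [l [e1 _]]]]]] := Hch m; rewrite e1; have [-> _] := Hsq m; exact: upd_lt.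
have sA' : forall m i, (i < m)%N -> ya (sq m) i = ya (sq i.+1) i.
  apply: (stab _ (fun m => ya (sq m))) => m i hi.
  have [hl [a [b [k [l [_ [e1 _]]]]]]] := Hch m; rewrite e1; have [-> _] := Hsq m; exact: upd_lt.
have sB : forall m i, (i < m)%N -> xb (sq m) i = xb (sq i.+1) i.
  apply: (stab _ (fun m => xb (sq m))) => m i hi.
  have [hl [a [b [k [l [_ [_ [e1 _]]]]]]]] := Hch m; rewrite e1; have [-> _] := Hsq m; exact: upd_lt.
have sB' : forall m i, (i < m)%N -> yb (sq m) i = yb (sq i.+1) i.
  apply: (stab _ (fun m => yb (sq m))) => m i hi.
  have [hl [a [b [k [l [_ [_ [_ e1]]]]]]]] := Hch m; rewrite e1; have [-> _] := Hsq m; exact: upd_lt.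
pose XA i := xa (sq i.+1) i; pose YA i := ya (sq i.+1) i.
pose XB i := xb (sq i.+1) i; pose YB i := yb (sq i.+1) i.
have nonA : forall m, exists x y, agree m x (xa (sq m)) /\ agree m y (ya (sq m)) /\ FA x y.
  move=> m; have [hl hn] := Hsq m; apply: NNPP => hne; apply: hn.
  exists (fun _ => False); split; first exact: borel_F.
  split; last by move=> x _ [].
  move=> x [y [h1 [h2 h3]]]; rewrite hl in h1 h2; apply: hne; by exists x, y.
have nonB : forall m, exists x y, agree m x (xb (sq m)) /\ agree m y (yb (sq m)) /\ FB x y.
  move=> m; have [hl hn] := Hsq m; apply: NNPP => hne; apply: hn.
  exists (fun _ => True); split; first exact: borel_T.
  split => //; move=> x [y [h1 [h2 h3]]] _; rewrite hl in h1 h2; apply: hne; by exists x, y.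
have AXA : A XA.
  apply/HA; exists YA; apply: cFA => n; have [x [y [h1 [h2 h3]]]] := nonA n.
  exists x, y; split; first by move=> i hi; rewrite h1 // sA.
  by split => // i hi; rewrite h2 // sA'.
have BXB : B XB.
  apply/HB; exists YB; apply: cFB => n; have [x [y [h1 [h2 h3]]]] := nonB n.
  exists x, y; split; first by move=> i hi; rewrite h1 // sB.
  by split => // i hi; rewrite h2 // sB'.
case: (classic (forall i, XA i = XB i)) => hall.
  have e : XA = XB by apply: functional_extensionality.
  by apply: (disj XA) => //; rewrite e.
have [i hi] : exists i, XA i <> XB i.
  by apply: NNPP => h; apply: hall => i; apply: NNPP => h'; apply: h; exists i.
have [hl hn] := Hsq i.+1; apply: hn.
exists (fun x => x i = XA i); split.
  by apply: borel_clopen; exists i.+1 => x y h <-; rewrite h.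
rewrite hl; split.
  by move=> x [y [h1 _]]; rewrite h1.
by move=> x [y [h1 _]]; rewrite h1 // => /esym.
Qed.
End Separation.

Section SepFamily.
Variable S : countType.

Lemma sep_family (I : countType) (Z : I -> (nat -> S) -> Prop) :
  (forall i, an (Z i)) -> (forall i j, i <> j -> forall x, Z i x -> Z j x -> False) ->
  exists D : I -> (nat -> S) -> Prop, (forall i, borel (D i)) /\ (forall i x, Z i x -> D i x) /\
    (forall i j x, i <> j -> D i x -> D j x -> False).
Proof.
move=> Han Hdisj.
have H : forall ij : I * I, exists C : (nat -> S) -> Prop, ij.1 <> ij.2 ->
    borel C /\ (forall x, Z ij.1 x -> C x) /\ (forall x, Z ij.2 x -> ~ C x).
  move=> [i j]; case: (classic (i = j)) => hij; first by exists (fun _ => True).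
  have HC := separation (Han i) (Han j) (Hdisj i j hij); case: HC => C HC; by exists C.
have [Sf HS] := fchoice H.
exists (fun i x => forall j, j <> i -> if (pickle i < pickle j)%N then Sf (i, j) x else ~ Sf (j, i) x).
split.
  move=> i; apply: borel_count_inter => j.
  case: (classic (j = i)) => hji.
    by apply: (borel_ext (borel_T _)) => x; split.
  apply: (borel_ext (B := fun x => if (pickle i < pickle j)%N then Sf (i, j) x else ~ Sf (j, i) x)).
    case: (pickle i < pickle j)%N; first by have [] := HS (i, j) (nesym hji).
    by apply: borel_compl; have [] := HS (j, i) hji.
  by move=> x; split => [h _|h]; [|apply: h].
split.
  move=> i x Zx j hji; case: (pickle i < pickle j)%N.
    by have [_ [h _]] := HS (i, j) (nesym hji); apply: h.
  by have [_ [_ h]] := HS (j, i) hji; apply: h.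
move=> i j x hij Di Dj.
have hp : pickle i != pickle j by apply/eqP => /(pcan_inj (@pickleK I)).
case: (ltngtP (pickle i) (pickle j)) => hl.
- have := Di j (nesym hij); rewrite hl => h1.
  by have := Dj i hij; rewrite ltnNge (ltnW hl) /= => h2.
- have := Dj i hij; rewrite hl => h1.
  by have := Di j (nesym hij); rewrite ltnNge (ltnW hl) /= => h2.
- by rewrite hl eqxx in hp.
Qed.

End SepFamily.

Lemma closedP_local (S : Type) (Q : (nat -> S) -> (nat -> nat) -> Prop) :
  (forall x y, exists n, forall x' y', agree n x x' -> agree n y y' -> Q x' y' -> Q x y) ->
  closedP Q.
Proof.
move=> H x y Happ; have [n Hn] := H x y; have [x' [y' [h1 [h2 h3]]]] := Happ n.
exact: Hn h3.
Qed.

Lemma closedP_and (S : Type) (P Q : (nat -> S) -> (nat -> nat) -> Prop) :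
  closedP P -> closedP Q -> closedP (fun x y => P x y /\ Q x y).
Proof.
move=> hP hQ x y H; split.
  apply: hP => n; have [x' [y' [h1 [h2 [h3 _]]]]] := H n; by exists x', y'.
apply: hQ => n; have [x' [y' [h1 [h2 [_ h3]]]]] := H n; by exists x', y'.
Qed.

Lemma closedP_all (S : Type) (I : Type) (Q : I -> (nat -> S) -> (nat -> nat) -> Prop) :
  (forall i, closedP (Q i)) -> closedP (fun x y => forall i, Q i x y).
Proof.
move=> hQ x y H i; apply: hQ => n; have [x' [y' [h1 [h2 h3]]]] := H n; by exists x', y'.
Qed.

Lemma an_const_impl (S : Type) (P : Prop) (A : (nat -> S) -> Prop) : an A -> an (fun x => P -> A x).
Proof.
move=> HA; case: (classic P) => HP.
  by apply: an_ext HA => x; split => [h _|h]; [|apply: h].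
apply: (an_ext (A := fun _ => True)) => [x|]; first by split.
by apply: an_closed.
Qed.

Lemma mkseq_agree (T : Type) n (x y : nat -> T) : agree n x y -> mkseq x n = mkseq y n.
Proof.
move=> h; rewrite /mkseq; apply/eq_in_map => i; rewrite mem_iota add0n => hi; exact: h.
Qed.

Lemma an_borel (S : Type) (B : (nat -> S) -> Prop) : borel B -> an B.
Proof. by case/borel_an. Qed.

Section Automaton.
Variables (Sigma K : finType) (k : nat) (A : counter_automaton Sigma K k).

Local Notation cfg := (K * {ffun 'I_k -> nat})%type.
Definition c0 : cfg := (q0 A, [ffun _ => 0%N]).
Definition isfinal (c : cfg) : Prop := c.1 \in final A.

Definition thr (r : nat -> cfg) (t : seq cfg) := mkseq r (size t) = t.
Definition ext (u : seq Sigma) (x : nat -> Sigma) := mkseq x (size u) = u.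

Definition Lp (t : seq cfg) (x : oword Sigma) := exists r, accepting_run A x r /\ thr r t.

Definition LL (u : seq Sigma) (P : seq (seq cfg)) (x : oword Sigma) :=
  ext u x /\ lang A x /\ forall t, t \in P -> Lp t x.

Definition good u P := exists B, borel B /\ (forall x, LL u P x -> B x) /\ (forall x, B x -> lang A x).
Definition bad u P := ~ good u P.

Lemma thrP r t : thr r t <-> forall i, (i < size t)%N -> r i = nth c0 t i.
Proof.
rewrite /thr; split.
  move=> e i hi; have := congr1 (fun s => nth c0 s i) e; rewrite /= nth_mkseq //.
move=> h; apply: (eq_from_nth (x0 := c0)); first by rewrite size_mkseq.
by move=> i; rewrite size_mkseq => hi; rewrite nth_mkseq // h.
Qed.

Lemma extP (a0 : Sigma) u x : ext u x <-> forall i, (i < size u)%N -> x i = nth a0 u i.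
Proof.
rewrite /ext; split.
  move=> e i hi; have := congr1 (fun s => nth a0 s i) e; rewrite /= nth_mkseq //.
move=> h; apply: (eq_from_nth (x0 := a0)); first by rewrite size_mkseq.
by move=> i; rewrite size_mkseq => hi; rewrite nth_mkseq // h.
Qed.


Definition dec (y : nat -> nat) (i : nat) : cfg := odflt c0 (unpickle (y i.*2)).

Definition FL (t : seq cfg) (x : nat -> Sigma) (y : nat -> nat) :=
  (dec y 0 = c0 /\ forall i, step A (dec y i) (x i) (dec y i.+1)) /\
  (forall i, ((i < size t)%N -> dec y i = nth c0 t i) /\
     ((i <= y i.*2.+1)%N /\ isfinal (dec y (y i.*2.+1)))).

Lemma FL_closed t : closedP (FL t).
Proof.
apply: closedP_and; [apply: closedP_and|apply: closedP_all => i].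
- apply: closedP_local => x y; exists 1%N => x' y' h1 h2.
  by rewrite /dec h2.
- apply: closedP_all => i; apply: closedP_local => x y; exists (i.+1.*2.+1) => x' y' h1 h2.
  rewrite /dec h1 ?h2 //; lia.
- apply: closedP_and.
    apply: closedP_local => x y; exists (i.*2.+1) => x' y' h1 h2.
    rewrite /dec h2 //.
  apply: closedP_local => x y; exists (i.*2.+2 + (y i.*2.+1).*2).+1 => x' y' h1 h2.
  have e1 : y' i.*2.+1 = y i.*2.+1 by rewrite h2 //; lia.
  rewrite /dec -e1 h2 //; rewrite e1; lia.
Qed.

Lemma Lp_FL t x : Lp t x <-> exists y, FL t x y.
Proof.
split.
  move=> [r [[[h0 hs] hacc] ht]].
  have hw : forall j, exists n, (j <= n)%N /\ isfinal (r n).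
    by move=> j; have [n [h1 h2]] := hacc j; exists n.
  have [w Hw] := fchoice hw.
  exists (fun m => if odd m then w m./2 else pickle (r m./2)).
  have hd : forall i, dec (fun m => if odd m then w m./2 else pickle (r m./2)) i = r i.
    by move=> i; rewrite /dec odd_double doubleK pickleK.
  have hw2 : forall j, (fun m => if odd m then w m./2 else pickle (r m./2)) j.*2.+1 = w j.
    by move=> j /=; rewrite odd_double /= uphalf_double.
  rewrite /FL !hd; split; first by split => // i; rewrite !hd.
  move=> i; rewrite hw2 hd; split; first by move/thrP : ht; apply.
  by rewrite hd; exact: Hw.
move=> [y [[h0 hs] hf]]; exists (dec y); split; last by apply/thrP => i hi; case: (hf i) => ->.
split; first by split.
move=> N; have [_ [h1 h2]] := hf N; by exists (y N.*2.+1).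
Qed.

Lemma Lp_an t : an (Lp t).
Proof.
exists (FL t); split; [exact: FL_closed|exact: Lp_FL].
Qed.

Lemma ext_borel u : borel (ext u).
Proof.
apply: borel_clopen; exists (size u) => x y h hx; rewrite /ext -(mkseq_agree h); exact: hx.
Qed.

Lemma LL_an u P : an (LL u P).
Proof.
apply: an_inter2; first exact/an_borel/ext_borel.
apply: an_inter2.
  apply: (an_ext (A := Lp [::])) => [x|]; last exact: Lp_an.
  by split => [[r [h _]]|[r h]]; exists r.
apply: (an_ext (A := fun x => forall j : nat, (j < size P)%N -> Lp (nth [::] P j) x)).
  move=> x; split => [h t /(nthP [::]) [j hj <-]|h j hj]; first exact: h.
  by apply: h; rewrite mem_nth.
by apply: an_cinter => j; apply: an_const_impl; apply: Lp_an.
Qed.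

End Automaton.

Section Prefix.
Variable T : eqType.
Implicit Types s t : seq T.

Lemma tk_mkseq (f : nat -> T) m n : (m <= n)%N -> take m (mkseq f n) = mkseq f m.
Proof.
by move=> h; rewrite /mkseq -map_take take_iota (minn_idPl h).
Qed.

Lemma pfx_mkseq (f : nat -> T) m n : (m <= n)%N -> prefix (mkseq f m) (mkseq f n).
Proof. by move=> h; rewrite prefixE tk_mkseq // size_mkseq. Qed.

Lemma pfx_take s t : prefix s t -> take (size s) t = s.
Proof. by rewrite prefixE => /eqP. Qed.

Lemma pfx_nth x0 s t i : prefix s t -> (i < size s)%N -> nth x0 s i = nth x0 t i.
Proof. by move=> hp hi; rewrite -(pfx_take hp) nth_take. Qed.

Lemma pfx_common s1 s2 t : prefix s1 t -> prefix s2 t -> prefix s1 s2 || prefix s2 s1.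
Proof.
move=> h1 h2; case: (leqP (size s1) (size s2)) => hs.
  apply/orP; left; rewrite prefixE -(pfx_take h2) take_takel // (pfx_take h1) //.
apply/orP; right; rewrite prefixE -(pfx_take h1) take_takel ?(pfx_take h2) //.
exact: ltnW.
Qed.

Definition incomp s t := ~~ prefix s t && ~~ prefix t s.

Lemma incomp_ext s t s' t' : incomp s t -> prefix s s' -> prefix t t' -> incomp s' t'.
Proof.
move=> /andP [h1 h2] hs ht; apply/andP; split; apply/negP => h.
  by have := pfx_common (prefix_trans hs h) ht; rewrite (negbTE h1) (negbTE h2).
by have := pfx_common hs (prefix_trans ht h); rewrite (negbTE h1) (negbTE h2).
Qed.

Lemma pfx_same_size s t : prefix s t -> size s = size t -> s = t.
Proof. by move=> hp e; rewrite -(pfx_take hp) e take_size. Qed.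

End Prefix.

Section Hull.
Variables (Sigma K : finType) (k : nat) (A : counter_automaton Sigma K k).
Local Notation cfg := (K * {ffun 'I_k -> nat})%type.

Definition hull (Q : oword Sigma -> Prop) :=
  exists B, borel B /\ (forall x, Q x -> B x) /\ (forall x, B x -> lang A x).

Lemma hull_sub (Q Q' : oword Sigma -> Prop) : (forall x, Q x -> Q' x) -> hull Q' -> hull Q.
Proof. move=> h [B [h1 [h2 h3]]]; exists B; split => //; split => // x /h; exact: h2. Qed.

Lemma hull_union (I : countType) (Q : I -> oword Sigma -> Prop) :
  (forall i, hull (Q i)) -> hull (fun x => exists i, Q i x).
Proof.
move=> H; have [B HB] := fchoice H.
exists (fun x => exists i, B i x); split; first by apply: borel_count_union => i; case: (HB i).
split; first by move=> x [i hi]; exists i; have [_ [h _]] := HB i; exact: h.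
by move=> x [i hi]; have [_ [_ h]] := HB i; exact: h.
Qed.

Lemma hull_or (Q Q' : oword Sigma -> Prop) : hull Q -> hull Q' -> hull (fun x => Q x \/ Q' x).
Proof.
move=> h1 h2; apply: (hull_sub (Q' := fun x => exists b : bool, if b then Q x else Q' x)).
  by move=> x [h|h]; [exists true|exists false].
by apply: hull_union => -[].
Qed.

Lemma borel_single (x0 : oword Sigma) : borel (fun x => x = x0).
Proof.
apply: (borel_ext (B := fun x => ~ (x <> x0))).
  apply: borel_compl; apply: borel_open => x hx.
  have [i hi] : exists i, x i <> x0 i.
    apply: NNPP => h; apply: hx; apply: functional_extensionality => i.
    by apply: NNPP => h'; apply: h; exists i.
  by exists i.+1 => y hy e; apply: hi; rewrite hy // e.
by move=> x; split => [/NNPP|h]//.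
Qed.

Lemma hull_atmost1 (Q : oword Sigma -> Prop) :
  (forall x, Q x -> lang A x) -> (forall x y, Q x -> Q y -> x = y) -> hull Q.
Proof.
move=> hl hu; case: (classic (exists x, Q x)) => [[x0 h0]|hn].
  exists (fun x => x = x0); split; first exact: borel_single.
  by split => [x hx|x ->]; [exact: hu|exact: hl].
exists (fun _ => False); split; first exact: borel_F.
by split => // x hx; apply: hn; exists x.
Qed.

End Hull.

Section Core.
Variables (Sigma K : finType) (k : nat) (A : counter_automaton Sigma K k).
Local Notation cfg := (K * {ffun 'I_k -> nat})%type.
Local Notation C0 := (c0 A).
Local Notation LL := (LL A).
Local Notation bad := (bad A).
Local Notation good := (good A).
Local Notation Lp := (Lp A).
Local Notation hull := (hull A).
Local Notation isfinal := (isfinal A).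

Lemma good_hull u P : good u P <-> hull (LL u P).
Proof. by []. Qed.

Lemma LL_mem u (P P' : seq (seq cfg)) : (forall t, (t \in P) = (t \in P')) -> forall x, LL u P x <-> LL u P' x.
Proof.
move=> h x; rewrite /Submission.LL; split => -[h1 [h2 h3]]; do 2 split => //.
  by move=> t; rewrite -h; apply: h3.
by move=> t; rewrite h; apply: h3.
Qed.

Lemma bad_mem u (P P' : seq (seq cfg)) : (forall t, (t \in P) = (t \in P')) -> bad u P -> bad u P'.
Proof.
move=> h hb hg; apply: hb; apply: hull_sub hg => x; rewrite (LL_mem u h) //.
Qed.

Lemma thr_mkseq (r : nat -> cfg) m : thr r (mkseq r m).
Proof. by rewrite /thr size_mkseq. Qed.

Lemma thr_prefix (r : nat -> cfg) t t' : thr r t -> prefix t' t -> thr r t'.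
Proof.
move=> ht hp; have e : t' = take (size t') t by rewrite (pfx_take hp).
rewrite /thr {2}e -ht tk_mkseq //; exact: size_prefix.
Qed.

Lemma thr_eq (r : nat -> cfg) t : thr r t -> t = mkseq r (size t).
Proof. by move=> h; rewrite h. Qed.

Lemma thr_nth (r : nat -> cfg) t i : thr r t -> (i < size t)%N -> nth C0 t i = r i.
Proof. by move=> /(thrP A) h hi; rewrite h. Qed.

Lemma Lp_mk x (r : nat -> cfg) m : accepting_run A x r -> Lp (mkseq r m) x.
Proof. by move=> h; exists r; split => //; apply: thr_mkseq. Qed.

Lemma acc_after x (r : nat -> cfg) N : accepting_run A x r -> exists n, (N <= n)%N /\ isfinal (r n).
Proof. by move=> [_ h]; have [n [h1 h2]] := h N; exists n. Qed.

Lemma adv1 u p P : bad u (p :: P) -> exists p', prefix p p' /\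
  (exists i, (size p <= i < size p')%N /\ isfinal (nth C0 p' i)) /\ bad u (p' :: P).
Proof.
move=> hb; apply: NNPP => H; apply: hb.
pose cond p' := prefix p p' /\ (exists i, (size p <= i < size p')%N /\ isfinal (nth C0 p' i)).
apply: (hull_sub (Q' := fun x => exists p' : seq cfg, cond p' /\ LL u (p' :: P) x)).
  move=> x [h1 [h2 h3]].
  have [r [hr ht]] := h3 p (mem_head _ _).
  have [n [hn hf]] := acc_after (size p) hr.
  exists (mkseq r n.+1); split.
    split; first by rewrite (thr_eq ht); apply: pfx_mkseq; rewrite ltnW.
    by exists n; rewrite size_mkseq nth_mkseq // hn ltnSn.
  do 2 split => //; move=> t; rewrite in_cons => /orP [/eqP ->|ht']; first exact: Lp_mk.
  by apply: h3; rewrite in_cons ht' orbT.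
apply: hull_union => p'; case: (classic (cond p')) => hc.
  apply: (hull_sub (Q' := LL u (p' :: P))); first by move=> x [].
  by apply: NNPP => hn; apply: H; exists p'; case: hc => h1 h2; split => //; split.
by exists (fun _ => False); split; [exact: borel_F|split => // x []].
Qed.


Lemma ext_mk (x : oword Sigma) m : ext (mkseq x m) x.
Proof. by rewrite /ext size_mkseq. Qed.

Lemma empty_hull (Q : oword Sigma -> Prop) : (forall x, ~ Q x) -> hull Q.
Proof.
move=> h; exists (fun _ => False); split; first exact: borel_F.
by split => // x /h.
Qed.

Lemma fun_neq (T U : Type) (f g : T -> U) : f <> g -> exists i, f i <> g i.
Proof.
move=> h; apply: NNPP => hn; apply: h; apply: functional_extensionality => i.
by apply: NNPP => h'; apply: hn; exists i.
Qed.

Lemma xsplit (a0 : Sigma) u P : bad u P -> exists u0 u1, prefix u u0 /\ prefix u u1 /\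
  (exists i, (i < size u0)%N /\ (i < size u1)%N /\ nth a0 u0 i <> nth a0 u1 i) /\
  bad u0 P /\ bad u1 P.
Proof.
move=> hb; apply: NNPP => H; apply: hb.
pose E x := LL u P x /\ forall v, prefix u v -> ext v x -> bad v P.
apply: (hull_sub (Q' := fun x => (exists v : seq Sigma, (prefix u v /\ good v P) /\ LL v P x) \/ E x)).
  move=> x hx; case: (classic (forall v, prefix u v -> ext v x -> bad v P)) => hc.
    by right.
  left; have [v hv] : exists v, ~ (prefix u v -> ext v x -> bad v P).
    by apply: NNPP => hn; apply: hc => v; apply: NNPP => h; apply: hn; exists v.
  exists v; split.
    by split; [apply: NNPP => h; apply: hv|apply: NNPP => h; apply: hv].
  have hext : ext v x by apply: NNPP => h; apply: hv.
  by case: hx => _ [h2 h3]; split.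
apply: hull_or.
  apply: hull_union => v; case: (classic (prefix u v /\ good v P)) => hc.
    by apply: (hull_sub (Q' := LL v P)) => [x []|]; case: hc.
  by apply: empty_hull => x [].
apply: hull_atmost1; first by move=> x [[_ [h _]] _].
move=> x y [hx ex] [hy ey]; apply: NNPP => hne.
have [i hi] := fun_neq hne.
pose m := maxn (size u) i.+1.
have hux : prefix u (mkseq x m).
  by case: hx => hu _; rewrite -hu; apply: pfx_mkseq; rewrite leq_maxl.
have huy : prefix u (mkseq y m).
  by case: hy => hu _; rewrite -hu; apply: pfx_mkseq; rewrite leq_maxl.
apply: H; exists (mkseq x m), (mkseq y m); split => //; split => //.
split; last by split; [apply: ex => //; apply: ext_mk|apply: ey => //; apply: ext_mk].
have him : (i < m)%N by rewrite leq_maxr.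
by exists i; rewrite !size_mkseq !nth_mkseq.
Qed.


Section LS.
Variables (Z : oword Sigma -> Prop) (p : seq cfg).
Hypothesis Zan : an Z.
Hypothesis Zex : forall x, Z x -> exists r, accepting_run A x r /\ thr r p.
Hypothesis Zun : forall x (r r' : nat -> cfg), Z x -> accepting_run A x r -> thr r p ->
  accepting_run A x r' -> thr r' p -> r = r'.

Definition Zf (m : nat) (t : seq cfg) (x : oword Sigma) :=
  ((size t == m) && prefix p t) /\ Z x /\ Lp t x.

Lemma Zf_disj m t t' : t <> t' -> forall x, Zf m t x -> Zf m t' x -> False.
Proof.
move=> hne x [/andP [/eqP s1 p1] [hz [r [hr ht]]]] [/andP [/eqP s2 p2] [_ [r' [hr' ht']]]].
have e := Zun hz hr (thr_prefix ht p1) hr' (thr_prefix ht' p2).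
apply: hne; rewrite (thr_eq ht) (thr_eq ht') e s1 s2 //.
Qed.

Lemma DD_ex : exists DD : nat -> seq cfg -> oword Sigma -> Prop, forall m,
  (forall t, borel (DD m t)) /\ (forall t x, Zf m t x -> DD m t x) /\
  (forall t t' x, t <> t' -> DD m t x -> DD m t' x -> False).
Proof.
have H : forall m, exists D : seq cfg -> oword Sigma -> Prop,
  (forall t, borel (D t)) /\ (forall t x, Zf m t x -> D t x) /\
  (forall t t' x, t <> t' -> D t x -> D t' x -> False).
  move=> m; apply: sep_family; last exact: Zf_disj.
  move=> t; apply: an_const_and; apply: an_inter2 => //; exact: Lp_an.
exact: (fchoice H).
Qed.

Lemma LS : hull Z.
Proof.
have [DD HDD] := DD_ex.
pose D t := DD (size t) t.
have Dborel : forall t, borel (D t) by move=> t; case: (HDD (size t)) => h _; exact: h.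
have Dcover : forall t x, Zf (size t) t x -> D t x.
  by move=> t x; case: (HDD (size t)) => _ [h _]; exact: h.
have Ddisj : forall t t' x, size t = size t' -> D t x -> D t' x -> t = t'.
  move=> t t' x e h1 h2; apply: NNPP => hne; case: (HDD (size t)) => _ [_ h].
  by apply: (h t t' x hne h1); rewrite /D -e in h2.
pose E t x := forall m, (size p <= m <= size t)%N -> D (take m t) x.
pose V t (x : oword Sigma) := ((0 < size t)%N -> nth C0 t 0 = C0) /\
  forall i, (i.+1 < size t)%N -> step A (nth C0 t i) (x i) (nth C0 t i.+1).
pose W t x := prefix p t /\ E t x /\ V t x.
have Wborel : forall t, borel (W t).
  move=> t; apply: borel_const_and; apply: borel_and.
    apply: borel_cinter => m; apply: borel_const_impl; exact: Dborel.
  apply: borel_clopen; exists (size t) => x y h [h1 h2]; split => // i hi.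
  rewrite -h; [exact: h2|exact: ltnW].
pose B x := (forall m, (size p <= m)%N -> exists t, size t = m /\ W t x) /\
  (forall N, exists t, W t x /\ exists i, (N <= i < size t)%N /\ isfinal (nth C0 t i)).
exists B; split.
  apply: borel_and.
    apply: borel_cinter => m; apply: borel_const_impl.
    by apply: borel_count_union => t; apply: borel_const_and.
  apply: borel_cinter => N; apply: borel_count_union => t.
  apply: (borel_ext (B := fun x => (exists i, (N <= i < size t)%N /\ isfinal (nth C0 t i)) /\ W t x)).
    exact: borel_const_and.
  by move=> x; split => -[].
split.
  move=> x hz; have [r [hr hp]] := Zex hz.
  have Wmk : forall m, (size p <= m)%N -> W (mkseq r m) x.
    move=> m hm; split; first by rewrite (thr_eq hp); apply: pfx_mkseq.
    split.
      move=> m' /andP [h1 h2]; rewrite size_mkseq in h2; rewrite tk_mkseq //.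
      apply: Dcover; split; last by split => //; apply: Lp_mk.
      by rewrite size_mkseq eqxx /= (thr_eq hp); apply: pfx_mkseq.
    rewrite /V size_mkseq; split; first by move=> h0; rewrite nth_mkseq //; case: hr => -[].
    move=> i hi; rewrite !nth_mkseq //; last exact: ltnW.
    by case: hr => -[_ hs] _; apply: hs.
  split; first by move=> m hm; exists (mkseq r m); split; [rewrite size_mkseq|apply: Wmk].
  move=> N; have [n [hn hf]] := acc_after (N + size p) hr.
  exists (mkseq r n.+1); split; first by apply: Wmk; lia.
  exists n; rewrite size_mkseq nth_mkseq // ltnSn andbT; split => //.
  exact: leq_trans (leq_addr _ _) hn.
move=> x [hB1 hB2].
have hsig : forall m, exists t, (size p <= m)%N -> size t = m /\ W t x.
  move=> m; case: (leqP (size p) m) => hm; first by have [t ht] := hB1 m hm; exists t.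
  by exists [::].
have [sg Hsg] := fchoice hsig.
set P0 := size p.
have chain : forall m m', (P0 <= m)%N -> (m <= m')%N -> take m (sg m') = sg m.
  move=> m m' h1 h2.
  have [e1 [_ [E1 _]]] := Hsg m' (leq_trans h1 h2).
  have [e2 [_ [E2 _]]] := Hsg m h1.
  have d1 := E1 m; rewrite e1 h1 h2 in d1; have {}d1 := d1 isT.
  have d2 := E2 m; rewrite e2 h1 leqnn in d2; have {}d2 := d2 isT.
  rewrite take_oversize in d2; last by rewrite e2.
  apply: (Ddisj _ _ x) => //; rewrite size_takel ?e1 ?e2 //.
pose r i := nth C0 (sg (i.+1 + P0)) i.
have rsg : forall m i, (P0 <= m)%N -> (i < m)%N -> r i = nth C0 (sg m) i.
  move=> m i hm hi; pose M := maxn m (i.+1 + P0).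
  rewrite /r -(chain m M) ?leq_maxl // -(chain (i.+1 + P0) M) ?leq_maxr ?leq_addl //.
  rewrite !nth_take //; lia.
exists r; split; first split.
- have [e1 [_ [_ [hv _]]]] := Hsg (1 + P0) (leq_addl _ _).
  by rewrite /r; apply: hv; rewrite e1.
- move=> i; have hm : (P0 <= i.+2 + P0)%N by apply: leq_addl.
  have [e1 [_ [_ [_ hv]]]] := Hsg _ hm.
  rewrite (rsg (i.+2 + P0) i hm); last lia.
  rewrite (rsg (i.+2 + P0) i.+1 hm); last lia.
  by apply: hv; rewrite e1; lia.
- move=> N; have [t [[hpt [Et Vt]] [i [/andP [hN hi] hf]]]] := hB2 N.
  have hsz : (P0 <= size t)%N by apply: size_prefix.
  have [e1 [_ [E1 _]]] := Hsg (size t) hsz.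
  have d1 := Et (size t); rewrite hsz leqnn take_size in d1; have {}d1 := d1 isT.
  have d2 := E1 (size t); rewrite e1 hsz leqnn in d2; have {}d2 := d2 isT.
  rewrite take_oversize in d2; last by rewrite e1.
  have et : sg (size t) = t by apply: (Ddisj _ _ x).
  exists i; split => //; rewrite (rsg (size t)) // et; exact: hf.
Qed.

End LS.

Lemma mk_neq (r r' : nat -> cfg) m i : (i < m)%N -> r i <> r' i -> incomp (mkseq r m) (mkseq r' m).
Proof.
move=> hi hne; have hs : size (mkseq r m) = size (mkseq r' m) by rewrite !size_mkseq.
apply/andP; split; apply/negP => h.
  have e := pfx_same_size h hs; apply: hne.
  by have := congr1 (fun s => nth C0 s i) e; rewrite /= !nth_mkseq.
have e := pfx_same_size h (esym hs); apply: hne.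
by have := congr1 (fun s => nth C0 s i) e; rewrite /= !nth_mkseq // => ->.
Qed.

Lemma rsplit1 u p P : bad u (p :: P) -> exists p' p'', prefix p p' /\ prefix p p'' /\
  incomp p' p'' /\ bad u (p' :: p'' :: P).
Proof.
move=> hb; apply: NNPP => H; apply: hb.
pose cond (pp : seq cfg * seq cfg) := [&& prefix p pp.1, prefix p pp.2 & incomp pp.1 pp.2].
have hBf : forall pp : seq cfg * seq cfg, exists B : oword Sigma -> Prop, borel B /\
    (cond pp -> forall x, LL u (pp.1 :: pp.2 :: P) x -> B x) /\ (forall x, B x -> lang A x).
  move=> [p1 p2]; case: (boolP (cond (p1, p2))) => hc.
    have : good u (p1 :: p2 :: P).
      apply: NNPP => hn; apply: H; exists p1, p2; case/and3P: hc => /= h1 h2 h3; split => //; split => //.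
    by move=> [B [h1 [h2 h3]]]; exists B; split => //; split.
  exists (fun _ => False); split; first exact: borel_F.
  by split => //; rewrite (negbTE hc).
have [Bf HBf] := fchoice hBf.
pose G x := exists pp, Bf pp x.
have Gb : borel G by apply: borel_count_union => pp; case: (HBf pp).
apply: (hull_sub (Q' := fun x => G x \/ (LL u (p :: P) x /\ ~ G x))).
  by move=> x hx; case: (classic (G x)) => h; [left|right].
apply: hull_or.
  exists G; split => //; split => // x [pp hpp]; case: (HBf pp) => _ [_ h]; exact: h hpp.
apply: (LS (p := p)).
- apply: an_inter2; first exact: LL_an.
  by case: (borel_an Gb).
- by move=> x [[_ [_ h]] _]; apply: h; rewrite mem_head.
move=> x r r' [hx hG] hr ht hr' ht'; apply: NNPP => hne.
have [i hi] := fun_neq hne.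
pose m := maxn (size p) i.+1.
have him : (i < m)%N by rewrite leq_maxr.
apply: hG; exists (mkseq r m, mkseq r' m); case: (HBf (mkseq r m, mkseq r' m)) => _ [h _].
apply: h.
  rewrite /cond /=; apply/and3P; split; last exact: mk_neq him hi.
    by rewrite {1}(thr_eq ht) pfx_mkseq ?leq_maxl.
  by rewrite {1}(thr_eq ht') pfx_mkseq ?leq_maxl.
case: hx => h1 [h2 h3]; do 2 split => //.
move=> t; rewrite !in_cons => /or3P [/eqP ->|/eqP ->|htP]; [exact: Lp_mk|exact: Lp_mk|].
by apply: h3; rewrite in_cons htP orbT.
Qed.

End Core.

Section Multi.
Variables (Sigma K : finType) (k : nat) (A : counter_automaton Sigma K k).
Local Notation cfg := (K * {ffun 'I_k -> nat})%type.
Local Notation C0 := (c0 A).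
Local Notation LL := (LL A).
Local Notation bad := (bad A).
Local Notation good := (good A).
Local Notation Lp := (Lp A).
Local Notation hull := (hull A).
Local Notation isfinal := (isfinal A).

Lemma splitR_multi u (P : seq (seq cfg)) : forall Q, bad u (Q ++ P) -> exists P',
  size P' = (size P).*2 /\
  (forall j (c : bool), (j < size P)%N -> prefix (nth [::] P j) (nth [::] P' (j.*2 + c))) /\
  (forall j, (j < size P)%N -> incomp (nth [::] P' j.*2) (nth [::] P' j.*2.+1)) /\
  bad u (Q ++ P').
Proof.
elim: P => [|p P1 IH] Q hb; first by exists [::].
have hb1 : bad u (p :: Q ++ P1).
  apply: (bad_mem _ hb) => t; rewrite !(mem_cat, in_cons).
  by case: (t == p); case: (t \in Q); case: (t \in P1).
have [p' [p'' [h1 [h2 [h3 hb2]]]]] := rsplit1 hb1.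
have hb3 : bad u ((Q ++ [:: p'; p'']) ++ P1).
  apply: (bad_mem _ hb2) => t; rewrite !(mem_cat, in_cons, in_nil).
  by case: (t == p'); case: (t == p''); case: (t \in Q); case: (t \in P1).
have [P1' [s1 [s2 [s3 hb4]]]] := IH _ hb3.
exists [:: p', p'' & P1']; split; first by rewrite /= s1.
split.
  move=> [|j] c /=; rewrite ?ltnS => hj; first by case: c.
  exact: s2.
split.
  by move=> [|j] /=; rewrite ?ltnS => hj //; apply: s3.
by apply: (bad_mem _ hb4) => t; rewrite -catA.
Qed.


Lemma adv_multi u (P : seq (seq cfg)) : forall Q, bad u (Q ++ P) -> exists P',
  size P' = size P /\
  (forall j, (j < size P)%N -> prefix (nth [::] P j) (nth [::] P' j) /\
     exists i, (size (nth [::] P j) <= i < size (nth [::] P' j))%N /\ isfinal (nth C0 (nth [::] P' j) i)) /\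
  bad u (Q ++ P').
Proof.
elim: P => [|p P1 IH] Q hb; first by exists [::].
have hb1 : bad u (p :: Q ++ P1).
  apply: (bad_mem _ hb) => t; rewrite !(mem_cat, in_cons).
  by case: (t == p); case: (t \in Q); case: (t \in P1).
have [p' [h1 [h2 hb2]]] := adv1 hb1.
have hb3 : bad u ((Q ++ [:: p']) ++ P1).
  apply: (bad_mem _ hb2) => t; rewrite !(mem_cat, in_cons, in_nil).
  by case: (t == p'); case: (t \in Q); case: (t \in P1).
have [P1' [s1 [s2 hb4]]] := IH _ hb3.
exists (p' :: P1'); split; first by rewrite /= s1.
split; first by move=> [|j] /=; rewrite ?ltnS => hj //; apply: s2.
by apply: (bad_mem _ hb4) => t; rewrite -catA.
Qed.

Lemma step_ex (a0 : Sigma) u (P : seq (seq cfg)) : bad u P -> exists u0 u1 (P' : seq (seq cfg)),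
  size P' = (size P).*2 /\
  (forall j (c : bool), (j < size P)%N -> prefix (nth [::] P j) (nth [::] P' (j.*2 + c)) /\
     exists i, (size (nth [::] P j) <= i < size (nth [::] P' (j.*2 + c)))%N /\
        isfinal (nth C0 (nth [::] P' (j.*2 + c)) i)) /\
  (forall j, (j < size P)%N -> incomp (nth [::] P' j.*2) (nth [::] P' j.*2.+1)) /\
  prefix u u0 /\ prefix u u1 /\
  (exists i, (i < size u0)%N /\ (i < size u1)%N /\ nth a0 u0 i <> nth a0 u1 i) /\
  bad u0 P' /\ bad u1 P'.
Proof.
move=> hb.
have [P1 [s1 [p1 [i1 hb1]]]] := splitR_multi (Q := [::]) hb.
have [P2 [s2 [p2 hb2]]] := adv_multi (Q := [::]) hb1.
have [u0 [u1 [hu0 [hu1 [hd [hb3 hb4]]]]]] := xsplit a0 hb2.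
exists u0, u1, P2; split; first by rewrite s2.
have hlt : forall j (c : bool), (j < size P)%N -> (j.*2 + c < size P1)%N.
  move=> j c hj; rewrite s1; case: c => /=; lia.
split.
  move=> j c hj; have [h1 [i [hi hf]]] := p2 _ (hlt j c hj).
  split; first exact: prefix_trans (p1 j c hj) h1.
  exists i; split => //; case/andP: hi => hi1 hi2; rewrite hi2 andbT.
  exact: leq_trans (size_prefix (p1 j c hj)) hi1.
split.
  move=> j hj; have [h1 _] := p2 _ (hlt j false hj); have [h2 _] := p2 _ (hlt j true hj).
  rewrite addn0 in h1; rewrite addn1 in h2.
  exact: incomp_ext (i1 j hj) h1 h2.
by do 2 split => //.
Qed.

Lemma root_bad : ~ borel (lang A) -> bad [::] [:: [:: C0]].
Proof.
move=> hnb [B [hB [h1 h2]]]; apply: hnb; apply: (borel_ext hB) => x; split; first exact: h2.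
move=> hl; apply: h1; split; first by [].
split => // t; rewrite inE => /eqP ->.
case: hl => r hr; exists r; split => //.
by case: hr => -[h0 _] _; rewrite /thr /mkseq /= h0.
Qed.

End Multi.

Lemma inj_surj_bij (T U : Type) (h : T -> U) : injective h -> (forall u, exists t, h t = u) -> bijective h.
Proof.
move=> hi hs; have [g hg] := fchoice hs.
by exists g => [t|u]; [apply: hi; rewrite hg|rewrite hg].
Qed.

Theorem SB (T U : Type) (t0 : T) (f : T -> U) (g : U -> T) :
  injective f -> injective g -> exists h : T -> U, bijective h.
Proof.
move=> hf hg.
pose C a := exists n a0, ~ (exists b, g b = a0) /\ iter n (fun z => g (f z)) a0 = a.
have hginv : forall a, exists b, (exists b', g b' = a) -> g b = a.
  move=> a; case: (classic (exists b', g b' = a)) => [[b hb]|hn]; first by exists b.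
  by exists (f t0).
have [ginv Hginv] := fchoice hginv.
pose h a := if excluded_middle_informative (C a) then f a else ginv a.
have notC : forall a, ~ C a -> g (ginv a) = a.
  move=> a hn; apply: Hginv; apply: NNPP => hn'; apply: hn; exists 0%N, a; split => //.
exists h; apply: inj_surj_bij.
  move=> a a'; rewrite /h.
  case: excluded_middle_informative => ha; case: excluded_middle_informative => ha'.
  - exact: hf.
  - move=> /= e; exfalso; apply ha'; have [n [a0 [h1 h2]]] := ha; exists n.+1, a0; split => //.
    by rewrite iterS h2 e notC.
  - move=> /= e; exfalso; apply ha; have [n [a0 [h1 h2]]] := ha'; exists n.+1, a0; split => //.
    by rewrite iterS h2 -e notC.
  - by move=> /= e; rewrite -(notC _ ha) -(notC _ ha') e.
move=> b; case: (classic (C (g b))) => hc.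
  case: hc => n [a0 [h1 h2]]; case: n h2 => [|n] h2.
    by exfalso; apply: h1; exists b.
  rewrite iterS in h2; have e := hg _ _ h2.
  exists (iter n (fun z => g (f z)) a0); rewrite /h.
  destruct (excluded_middle_informative _) as [hn|hn]; first by [].
  by exfalso; apply: hn; exists n, a0; split.
exists (g b); rewrite /h; destruct (excluded_middle_informative _) as [hn|hn]; first by [].
by apply: hg; rewrite notC.
Qed.

Definition enc (T : countType) (x : nat -> T) : nat -> bool :=
  fun n => if @unpickle (nat * nat)%type n is Some p then pickle (x p.1) == p.2 else false.

Lemma enc_inj (T : countType) : injective (@enc T).
Proof.
move=> x y e; apply: functional_extensionality => i.
have := congr1 (fun z => z (pickle (i, pickle (y i)))) e.
rewrite /enc pickleK /= eqxx => /eqP; apply: (pcan_inj (@pickleK T)).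
Qed.

Lemma sval_inj (T : Type) (P : T -> Prop) : injective (@proj1_sig T P).
Proof.
move=> [x hx] [y hy] /= e; subst y; f_equal; exact: proof_irrelevance.
Qed.

Lemma card_cont_of (T : countType) (P : (nat -> T) -> Prop) (F : (nat -> bool) -> nat -> T) :
  injective F -> (forall b, P (F b)) -> card_continuum P.
Proof.
move=> hF hP.
have := @SB (nat -> bool) {x | P x} (fun _ => false) (fun b => exist _ (F b) (hP b))
  (fun z => enc (proj1_sig z)).
case.
- by move=> b b' /(congr1 (@proj1_sig _ _)) /= /hF.
- by move=> z z' /enc_inj /sval_inj.
- by move=> h hh; exists h.
Qed.

Lemma chain_nth (T : eqType) (x0 : T) (s : nat -> seq T) :
  (forall m n, (m <= n)%N -> prefix (s m) (s n)) ->
  forall m n i, (i < size (s m))%N -> (i < size (s n))%N -> nth x0 (s m) i = nth x0 (s n) i.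
Proof.
move=> hc m n i h1 h2; case: (leqP m n) => h.
  exact: pfx_nth (hc _ _ h) h1.
by apply/esym; apply: pfx_nth (hc _ _ (ltnW h)) h2.
Qed.

Lemma chain_of (T : Type) (R : T -> T -> Prop) (s : nat -> T) :
  (forall x, R x x) -> (forall x y z, R x y -> R y z -> R x z) ->
  (forall n, R (s n) (s n.+1)) -> forall m n, (m <= n)%N -> R (s m) (s n).
Proof.
move=> hr ht hs m n /subnK <-; elim: (n - m)%N => [|d IH]; first exact: hr.
by rewrite addSn; apply: ht IH (hs _).
Qed.

Lemma first_diff (f g : nat -> bool) : f <> g -> exists n, f n <> g n /\ forall i, (i < n)%N -> f i = g i.
Proof.
move=> hne; have [i hi] := fun_neq hne.
have ex : exists n, f n != g n by exists i; apply/eqP.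
case: (ex_minnP ex) => n /eqP hn hmin; exists n; split => // j hj.
by apply/eqP; apply: contraTT hj => /hmin; rewrite -leqNgt.
Qed.

Section Construct.
Variables (Sigma K : finType) (k : nat) (A : counter_automaton Sigma K k) (a0 : Sigma).
Hypothesis hnb : ~ borel (lang A).
Local Notation cfg := (K * {ffun 'I_k -> nat})%type.
Local Notation C0 := (c0 A).
Local Notation LL := (LL A).
Local Notation bad := (bad A).
Local Notation Lp := (Lp A).
Local Notation isfinal := (isfinal A).

Definition SP (u : seq Sigma) (P : seq (seq cfg)) (M : seq Sigma * seq Sigma * seq (seq cfg)) :=
  size M.2 = (size P).*2 /\
  (forall j (c : bool), (j < size P)%N -> prefix (nth [::] P j) (nth [::] M.2 (j.*2 + c)) /\
     exists i, (size (nth [::] P j) <= i < size (nth [::] M.2 (j.*2 + c)))%N /\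
        isfinal (nth C0 (nth [::] M.2 (j.*2 + c)) i)) /\
  (forall j, (j < size P)%N -> incomp (nth [::] M.2 j.*2) (nth [::] M.2 j.*2.+1)) /\
  prefix u M.1.1 /\ prefix u M.1.2 /\
  (exists i, (i < size M.1.1)%N /\ (i < size M.1.2)%N /\ nth a0 M.1.1 i <> nth a0 M.1.2 i).

Lemma nxt_ex : exists F : seq Sigma * seq (seq cfg) -> seq Sigma * seq Sigma * seq (seq cfg),
  forall N, bad N.1 N.2 -> SP N.1 N.2 (F N) /\ bad (F N).1.1 (F N).2 /\ bad (F N).1.2 (F N).2.
Proof.
apply: (fchoice (R := fun N M => bad N.1 N.2 -> SP N.1 N.2 M /\ bad M.1.1 M.2 /\ bad M.1.2 M.2)).
move=> [u P]; case: (classic (bad u P)) => hb; last by exists ([::], [::], [::]).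
have [u0 [u1 [P' [h1 [h2 [h3 [h4 [h5 [h6 [h7 h8]]]]]]]]]] := step_ex a0 hb.
by exists (u0, u1, P') => _; split.
Qed.

End Construct.

Section Tree.
Variables (Sigma K : finType) (k : nat) (A : counter_automaton Sigma K k) (a0 : Sigma).
Hypothesis hnb : ~ borel (lang A).
Local Notation cfg := (K * {ffun 'I_k -> nat})%type.
Local Notation C0 := (c0 A).
Local Notation LL := (LL A).
Local Notation bad := (bad A).
Local Notation Lp := (Lp A).
Local Notation isfinal := (isfinal A).
Variable F : seq Sigma * seq (seq cfg) -> seq Sigma * seq Sigma * seq (seq cfg).
Hypothesis HF : forall N, bad N.1 N.2 -> SP A a0 N.1 N.2 (F N) /\ bad (F N).1.1 (F N).2 /\ bad (F N).1.2 (F N).2.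

Definition nxt (N : seq Sigma * seq (seq cfg)) (b : bool) :=
  ((if b then (F N).1.2 else (F N).1.1), (F N).2).

Fixpoint node (al : nat -> bool) (n : nat) : seq Sigma * seq (seq cfg) :=
  if n is n'.+1 then nxt (node al n') (al n') else ([::], [:: [:: C0]]).

Fixpoint jdx (be : nat -> bool) (n : nat) : nat :=
  if n is n'.+1 then ((jdx be n').*2 + be n')%N else 0%N.

Definition mem (al be : nat -> bool) n := nth [::] (node al n).2 (jdx be n).

Lemma node_bad al n : bad (node al n).1 (node al n).2 /\ size (node al n).2 = 2 ^ n.
Proof.
elim: n => [|n [hb hs]]; first by split => //; exact: root_bad.
have [[s1 _] [b0 b1]] := HF hb; rewrite /= /nxt; split; first by case: (al n).
by rewrite /= s1 hs expnS mul2n.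
Qed.

Lemma jdx_lt be n : (jdx be n < 2 ^ n)%N.
Proof.
elim: n => [//|n IH] /=; rewrite expnS; case: (be n) => /=; lia.
Qed.

Lemma jdx_size al be n : (jdx be n < size (node al n).2)%N.
Proof. by have [_ ->] := node_bad al n; exact: jdx_lt. Qed.

Lemma SPn al n : SP A a0 (node al n).1 (node al n).2 (F (node al n)).
Proof. by have [hb _] := node_bad al n; case: (HF hb). Qed.

Lemma mem_step al be n : prefix (mem al be n) (mem al be n.+1) /\
  exists i, (size (mem al be n) <= i < size (mem al be n.+1))%N /\ isfinal (nth C0 (mem al be n.+1) i).
Proof.
have [_ [h _]] := SPn al n; exact: h (jdx_size al be n).
Qed.

Lemma mem_chain al be m n : (m <= n)%N -> prefix (mem al be m) (mem al be n).
Proof.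
apply: (chain_of (R := fun s t => prefix s t)) => //.
- exact: prefix_refl.
- by move=> x y z h1 h2; exact: prefix_trans h1 h2.
- by move=> j; case: (mem_step al be j).
Qed.

Lemma mem_size al be n : (n < size (mem al be n))%N.
Proof.
elim: n => [//|n IH]; have [_ [i [/andP [h1 h2] _]]] := mem_step al be n.
exact: leq_ltn_trans IH (leq_ltn_trans h1 h2).
Qed.

Lemma u_step al n : prefix (node al n).1 (node al n.+1).1 /\ (size (node al n).1 < size (node al n.+1).1)%N.
Proof.
have [_ [_ [_ [h0 [h1 [i [hi0 [hi1 hne]]]]]]]] := SPn al n.
rewrite /= /nxt.
set u := (node al n).1 in h0 h1 *; set u0 := (F (node al n)).1.1 in h0 hi0 hne *.
set u1 := (F (node al n)).1.2 in h1 hi1 hne *.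
have big : forall v w, prefix u v -> prefix u w -> (i < size v)%N -> (i < size w)%N ->
    nth a0 v i <> nth a0 w i -> (size u < size v)%N.
  move=> v w hv hw iv iw ne; rewrite ltnNge; apply/negP => hle.
  have es : size u = size v by apply/eqP; rewrite eqn_leq hle size_prefix.
  have e : u = v := pfx_same_size hv es.
  by apply: ne; apply: pfx_nth => //; rewrite -e.
case: (al n) => /=; split => //.
  by apply: (big u1 u0) => // h; apply: hne.
exact: (big u0 u1).
Qed.

Lemma u_chain al m n : (m <= n)%N -> prefix (node al m).1 (node al n).1.
Proof.
apply: (chain_of (s := fun j => (node al j).1) (R := fun s t => prefix s t)) => //.
- exact: prefix_refl.
- by move=> x y z h1 h2; exact: prefix_trans h1 h2.
- by move=> j; case: (u_step al j).
Qed.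

Lemma u_size al n : (n <= size (node al n).1)%N.
Proof.
elim: n => [//|n IH]; have [_ h] := u_step al n; exact: leq_ltn_trans IH h.
Qed.

Definition X al i := nth a0 (node al i.+1).1 i.
Definition R al be i := nth C0 (mem al be i.+1) i.

Lemma X_nth al n i : (i < size (node al n).1)%N -> X al i = nth a0 (node al n).1 i.
Proof.
move=> hi; rewrite /X; apply: (@chain_nth _ a0 (fun j => (node al j).1)) => //.
  by move=> m n' h; apply: u_chain.
exact: u_size al i.+1.
Qed.

Lemma R_nth al be n i : (i < size (mem al be n))%N -> R al be i = nth C0 (mem al be n) i.
Proof.
move=> hi; rewrite /R; apply: (@chain_nth _ C0 (fun j => mem al be j)) => //.
  by move=> m n' h; apply: mem_chain.
exact: ltn_trans (ltnSn i) (mem_size al be i.+1).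
Qed.

Lemma R_thr al be n : thr (R al be) (mem al be n).
Proof. by apply/(thrP A) => i hi; apply: R_nth. Qed.

Lemma bad_ne u P : bad u P -> exists x, LL u P x.
Proof.
move=> hb; apply: NNPP => hn; apply: hb; exists (fun _ => False); split; first exact: borel_F.
by split => // x hx; apply: hn; exists x.
Qed.

Lemma R_acc al be : accepting_run A (X al) (R al be).
Proof.
split; first split.
- by rewrite (@R_nth al be 0 0).
- move=> i; pose n := i.+2.
  have [hb _] := node_bad al n; have [x [hx [_ hL]]] := bad_ne hb.
  have hm : mem al be n \in (node al n).2 by apply: mem_nth; apply: jdx_size.
  have [r [[[_ hs] _] ht]] := hL _ hm.
  have hsz := mem_size al be n.
  rewrite (@R_nth al be n i); last lia.
  rewrite (@R_nth al be n i.+1); last lia.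
  rewrite (@X_nth al n i); last by have := u_size al n; lia.
  rewrite (thr_nth A ht); last lia.
  rewrite (thr_nth A ht); last lia.
  by move/(extP a0): hx => <-; [apply: hs|have := u_size al n; lia].
- move=> N; have [_ [i [/andP [h1 h2] hf]]] := mem_step al be N.
  exists i; split; first by have := mem_size al be N; lia.
  by rewrite (@R_nth al be N.+1 i).
Qed.


Lemma node_agree al al' n : (forall i, (i < n)%N -> al i = al' i) -> node al n = node al' n.
Proof.
elim: n => [//|n IH] h /=; rewrite IH ?h //; move=> i hi; apply: h; exact: ltnW.
Qed.

Lemma jdx_agree be be' n : (forall i, (i < n)%N -> be i = be' i) -> jdx be n = jdx be' n.
Proof.
elim: n => [//|n IH] h /=; rewrite IH ?h //; move=> i hi; apply: h; exact: ltnW.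
Qed.

Lemma thr_comp (r : nat -> cfg) t t' : thr r t -> thr r t' -> prefix t t' || prefix t' t.
Proof.
move=> h h'; rewrite (thr_eq h) (thr_eq h').
case: (leqP (size t) (size t')) => hs; first by rewrite pfx_mkseq.
by rewrite (pfx_mkseq r (ltnW hs)) orbT.
Qed.

Lemma R_inj al : injective (R al).
Proof.
move=> be be' e; apply: NNPP => hne.
have [n [hn hag]] := first_diff hne.
have hj := jdx_agree hag.
have [_ [_ [hinc _]]] := SPn al n.
have hi := hinc _ (jdx_size al be n).
have t1 := R_thr al be n.+1; have t2 := R_thr al be' n.+1; rewrite -e in t2.
have := thr_comp t1 t2.
rewrite /mem /= /nxt /= -hj.
case: (be n) hn; case: (be' n) => // _; rewrite ?addn0 ?addn1.
- by case/andP: hi => /negbTE -> /negbTE ->.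
- by case/andP: hi => /negbTE -> /negbTE ->.
Qed.

Lemma X_inj : injective X.
Proof.
move=> al al' e; apply: NNPP => hne.
have [n [hn hag]] := first_diff hne.
have hN := node_agree hag.
have [_ [_ [_ [_ [_ [i [hi0 [hi1 hd]]]]]]]] := SPn al n.
have hx1 : X al i = nth a0 (node al n.+1).1 i.
  by apply: X_nth; rewrite /= /nxt; case: (al n).
have hx2 : X al' i = nth a0 (node al' n.+1).1 i.
  by apply: X_nth; rewrite /= /nxt -hN; case: (al' n).
have := congr1 (fun f => f i) e; rewrite /= hx1 hx2 /= /nxt -hN.
by case: (al n) hn; case: (al' n) => // _ /esym.
Qed.

Lemma main_tree : card_continuum (fun x : oword Sigma => card_continuum (accepting_run A x)).
Proof.
have hW : forall al, card_continuum (accepting_run A (X al)).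
  move=> al; exact: (@card_cont_of cfg (accepting_run A (X al)) (R al) (@R_inj al) (R_acc al)).
exact: (@card_cont_of Sigma _ X X_inj hW).
Qed.

End Tree.

Theorem mainTheorem16 (Sigma K : finType) (k : nat)
  (A : counter_automaton Sigma K k) :
  analytic (lang A) -> ~ borel (lang A) ->
  card_continuum (fun x : oword Sigma => card_continuum (accepting_run A x)).
Proof.
move=> _ hnb.
have [x0 _] : exists x, lang A x.
  apply: NNPP => hn; apply: hnb; apply: (borel_ext (borel_F _)) => x; split => // hx.
  by apply: hn; exists x.
have [F HF] := nxt_ex A (x0 0%N).
exact: (@main_tree _ _ _ A (x0 0%N) hnb F HF).
Qed.
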